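(* Let $n,k$ be odd integers with $2<2k\le n$. Suppose the integer program $( * )$ has a solution but no trivial solution, and let $(\mathsf{u},\mathsf{v}_+,\mathsf{v}_-,r,t)$ be a solution of $( * )$. Then $$\chi_c(\mathrm{Pet}(n,k))\ \ge\ 2+\frac{4r}{4r^2+2r+1}.$$
   Context: For integers $n,k$ with $2<2k\le n$, the generalized Petersen graph $\mathrm{Pet}(n,k)$ has vertex set $\{u_0,\dots,u_{n-1}\}\cup\{v_0,\dots,v_{n-1}\}$ and edge set $\{u_iu_{i+1}\}\cup\{u_iv_i\}\cup\{v_iv_{i+k}\}$, indices modulo $n$. The integer program $( * )$ is: minimize $\mathsf{u}+\mathsf{v}_++\mathsf{v}_-$ over integers $\mathsf{u},\mathsf{v}_+,\mathsf{v}_-,r\ge 0$ and $t\in\mathbb{Z}$ subject to $\mathsf{u}+k(\mathsf{v}_+-\mathsf{v}_-)=tn$ and $\mathsf{u}+\mathsf{v}_++\mathsf{v}_-=2r+1$. A solution is a minimizer; it is trivial if $\mathsf{u}=0$ or $\mathsf{v}_++\mathsf{v}_-=0$. For integers $p\ge 2q\ge 2$, the circular complete graph $K_{p/q}$ has vertex set $\{0,\dots,p-1\}$ with $i\sim j$ iff $q\le|i-j|\le p-q$; the circular chromatic number $\chi_c(G)$ is the minimum of $p/q$ over all such $p,q$ for which $G$ admits a homomorphism to $K_{p/q}$. *)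

(* Defs.v *)
From mathcomp Require Import all_boot all_order all_algebra.
Set Implicit Arguments. Unset Strict Implicit. Unset Printing Implicit Defensive.
Import Order.TTheory GRing.Theory Num.Theory.

(* Vertices of Pet(n,k): inl i = u_i, inr i = v_i, i in {0..n-1}. *)
Definition pet_vertex (n : nat) : finType := ('I_n + 'I_n)%type.

Definition pet_adj (n k : nat) : rel (pet_vertex n) :=
  fun x y =>
    match x, y with
    | inl i, inl j => (j == (i + 1) %% n :> nat) || (i == (j + 1) %% n :> nat)
    | inl i, inr j => i == j :> nat
    | inr i, inl j => i == j :> nat
    | inr i, inr j => (j == (i + k) %% n :> nat) || (i == (j + k) %% n :> nat)
    end.

Definition absdiff (i j : nat) : nat := if i <= j then j - i else i - j.

Definition circ_adj (p q : nat) (i j : 'I_p) : bool :=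
  (q <= absdiff i j) && (absdiff i j <= p - q).

Definition circ_hom (V : finType) (E : rel V) (p q : nat) : Prop :=
  exists f : V -> 'I_p, forall x y, E x y -> circ_adj q (f x) (f y).

(* chi_c(G) >= b: chi_c(G) is the minimum of p/q over all p >= 2q >= 2 with
   G -> K_{p/q}; it is >= b iff every such admissible ratio p/q is >= b. *)
Definition chi_c_ge (V : finType) (E : rel V) (b : rat) : Prop :=
  forall p q : nat, (1 <= q)%N -> (2 * q <= p)%N -> circ_hom E p q ->
    (b <= p%:Q / q%:Q)%R.

Definition ip_feasible (n k u vp vm r : nat) (t : int) : Prop :=
  ((u%:Z + k%:Z * (vp%:Z - vm%:Z))%R = (t * n%:Z)%R) /\ (u + vp + vm = 2 * r + 1)%N.

Definition ip_solution (n k u vp vm r : nat) (t : int) : Prop :=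
  ip_feasible n k u vp vm r t /\
  forall u' vp' vm' r' t', ip_feasible n k u' vp' vm' r' t' ->
    (u + vp + vm <= u' + vp' + vm')%N.

Definition ip_trivial (u vp vm : nat) : Prop := u = 0%N \/ (vp + vm = 0)%N.
Arguments pet_adj n k : clear implicits.

(* Main.v *)
Require Import Defs.
From mathcomp Require Import all_boot all_order all_algebra zify ring lra.
Import Order.TTheory GRing.Theory Num.Theory.
Set Implicit Arguments. Unset Strict Implicit. Unset Printing Implicit Defensive.

Definition Dd (p : nat) (T : Type) (f : T -> 'I_p) (x y : T) : nat := (f y + p - f x) %% p.

Lemma Dstep p T (f : T -> 'I_p) x y : (Dd f x y + f x) %% p = f y %% p.
Proof.
rewrite /Dd modnDml; have hx := ltn_ord (f x).
have -> : f y + p - f x + f x = f y + p by lia.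
by rewrite modnDr.
Qed.

Lemma chain p x y a b c : (x + a) %% p = b %% p -> (y + b) %% p = c %% p ->
  (y + x + a) %% p = c %% p.
Proof. by move=> h1 h2; rewrite -addnA -modnDmr h1 modnDmr. Qed.

Lemma telescope p T (f : T -> 'I_p) (g : nat -> T) m :
  (\sum_(j < m) Dd f (g j) (g j.+1) + f (g 0)) %% p = f (g m) %% p.
Proof.
elim: m => [|m IH]; first by rewrite big_ord0.
rewrite big_ord_recr /= [_ + Dd _ _ _]addnC; exact: chain IH (Dstep _ _ _).
Qed.

Lemma absdiff_lt p (a b : 'I_p) q : 1 <= q -> q <= absdiff a b <= p - q ->
  q <= Dd id a b <= p - q.
Proof.
rewrite /Dd /absdiff /= => hq; have ha := ltn_ord a; have hb := ltn_ord b.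
case: ifP => hab /andP[h1 h2].
  have -> : (b + p - a) = (b - a) + p by lia.
  by rewrite modnDr modn_small ?h1 ?h2 //; lia.
rewrite modn_small; last by lia.
apply/andP; split; lia.
Qed.

Lemma Dbounds p q T (f : T -> 'I_p) x y : 1 <= q -> circ_adj q (f x) (f y) ->
  q <= Dd f x y <= p - q.
Proof. rewrite /circ_adj => hq h. exact: (absdiff_lt hq h). Qed.

Lemma Dsym p q T (f : T -> 'I_p) x y : 1 <= q -> circ_adj q (f x) (f y) ->
  Dd f x y + Dd f y x = p.
Proof.
rewrite /circ_adj /Dd /absdiff => hq.
have ha := ltn_ord (f x); have hb := ltn_ord (f y).
case: ifP => hab /andP[h1 h2].
  have -> : (f y + p - f x) = (f y - f x) + p by lia.
  rewrite modnDr modn_small; last by lia.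
  rewrite modn_small; lia.
have -> : (f x + p - f y) = (f x - f y) + p by lia.
rewrite modnDr (modn_small (m := f x - f y)); last by lia.
rewrite modn_small; lia.
Qed.

Lemma sumbounds m a b (F : nat -> nat) : (forall j, j < m -> a <= F j <= b) ->
  m * a <= \sum_(j < m) F j <= m * b.
Proof.
move=> h; apply/andP; split.
  have -> : m * a = \sum_(j < m) a by rewrite sum_nat_const card_ord.
  by apply: leq_sum => j _; case/andP: (h j (ltn_ord j)).
have -> : m * b = \sum_(j < m) b by rewrite sum_nat_const card_ord.
by apply: leq_sum => j _; case/andP: (h j (ltn_ord j)).
Qed.

Definition U (m x : nat) : pet_vertex m.+1 := @inl 'I_m.+1 'I_m.+1 (inZp x).
Definition V (m x : nat) : pet_vertex m.+1 := @inr 'I_m.+1 'I_m.+1 (inZp x).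

Lemma U_mod m x y : x %% m.+1 = y %% m.+1 -> U m x = U m y.
Proof. by move=> h; rewrite /U; congr inl; apply: val_inj. Qed.
Lemma V_mod m x y : x %% m.+1 = y %% m.+1 -> V m x = V m y.
Proof. by move=> h; rewrite /V; congr inr; apply: val_inj. Qed.

Lemma adjUU m k x : pet_adj m.+1 k (U m x) (U m x.+1).
Proof. by rewrite /pet_adj /= -addn1 modnDml eqxx. Qed.
Lemma adjUV m k x : pet_adj m.+1 k (U m x) (V m x).
Proof. by rewrite /pet_adj /=. Qed.
Lemma adjVU m k x : pet_adj m.+1 k (V m x) (U m x).
Proof. by rewrite /pet_adj /=. Qed.
Lemma adjVf m k x : pet_adj m.+1 k (V m x) (V m (x + k)).
Proof. by rewrite /pet_adj /= modnDml eqxx. Qed.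
Lemma adjVb m k x : k <= m.+1 -> pet_adj m.+1 k (V m x) (V m (x + (m.+1 - k))).
Proof.
move=> hk; rewrite /pet_adj /=. idtac.
apply/orP; right; apply/eqP. by rewrite modnDml -addnA subnK // modnDr.
Qed.

Section Walks.
Definition PA m p (f : pet_vertex m.+1 -> 'I_p) u i :=
  \sum_(j < u) Dd f (U m (i + j)) (U m (i + j.+1)).
Definition PS m p (f : pet_vertex m.+1 -> 'I_p) u i := Dd f (U m (i + u)) (V m (i + u)).
Definition PF m k p (f : pet_vertex m.+1 -> 'I_p) u vp i :=
  \sum_(j < vp) Dd f (V m (i + (u + j * k))) (V m (i + (u + j.+1 * k))).
Definition PB m k p (f : pet_vertex m.+1 -> 'I_p) u vp vm i :=
  \sum_(j < vm) Dd f (V m (i + (u + vp * k + j * (m.+1 - k))))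
                     (V m (i + (u + vp * k + j.+1 * (m.+1 - k)))).
Definition PE m k p (f : pet_vertex m.+1 -> 'I_p) u vp vm i :=
  Dd f (V m (i + (u + vp * k + vm * (m.+1 - k)))) (U m i).
Definition W m k p (f : pet_vertex m.+1 -> 'I_p) u vp vm i :=
  PA f u i + PS f u i + PF k f u vp i + PB k f u vp vm i + PE k f u vp vm i.
End Walks.

Lemma W_div m k p (f : pet_vertex m.+1 -> 'I_p) u vp vm i :
  p %| W k f u vp vm i.
Proof.
have t1 : (PA f u i + f (U m (i + 0))) %% p = f (U m (i + u)) %% p :=
  telescope f (fun j => U m (i + j)) u.
rewrite addn0 in t1.
have t2 : (PS f u i + f (U m (i + u))) %% p = f (V m (i + u)) %% p := Dstep _ _ _.
have t3 : (PF k f u vp i + f (V m (i + (u + 0 * k)))) %% p = f (V m (i + (u + vp * k))) %% p :=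
  telescope f (fun j => V m (i + (u + j * k))) vp.
rewrite mul0n addn0 in t3.
have t4 : (PB k f u vp vm i + f (V m (i + (u + vp * k + 0 * (m.+1 - k))))) %% p
   = f (V m (i + (u + vp * k + vm * (m.+1 - k)))) %% p :=
  telescope f (fun j => V m (i + (u + vp * k + j * (m.+1 - k)))) vm.
rewrite mul0n addn0 in t4.
have t5 : (PE k f u vp vm i + f (V m (i + (u + vp * k + vm * (m.+1 - k))))) %% p
   = f (U m i) %% p := Dstep _ _ _.
have := chain (chain (chain (chain t1 t2) t3) t4) t5.
set a := f (U m i) : nat.
have -> : PE k f u vp vm i + (PB k f u vp vm i + (PF k f u vp i + (PS f u i + PA f u i)))
   = W k f u vp vm i by rewrite /W; lia.
move/eqP; rewrite -{2}[a]add0n eqn_modDr mod0n => /eqP h.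
by apply/eqP.
Qed.

Lemma W_per m k p (f : pet_vertex m.+1 -> 'I_p) u vp vm x y :
  x %% m.+1 = y %% m.+1 -> W k f u vp vm x = W k f u vp vm y.
Proof.
move=> h.
have hU : forall e, U m (x + e) = U m (y + e).
  by move=> e; apply: U_mod; rewrite -modnDml h modnDml.
have hV : forall e, V m (x + e) = V m (y + e).
  by move=> e; apply: V_mod; rewrite -modnDml h modnDml.
rewrite /W /PA /PS /PF /PB /PE (U_mod h) !hU !hV; congr (_ + _ + _ + _ + _).
- by apply: eq_bigr => j _; rewrite !hU.
- by apply: eq_bigr => j _; rewrite !hV.
- by apply: eq_bigr => j _; rewrite !hV.
Qed.

Lemma W_bounds m k p q (f : pet_vertex m.+1 -> 'I_p) u vp vm i :
  (forall x y, pet_adj m.+1 k x y -> circ_adj q (f x) (f y)) -> 1 <= q -> k <= m.+1 ->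
  (u + vp * k + vm * (m.+1 - k)) %% m.+1 = 0 ->
  [/\ u * q <= PA f u i <= u * (p - q), q <= PS f u i <= p - q,
      vp * q <= PF k f u vp i <= vp * (p - q), vm * q <= PB k f u vp vm i <= vm * (p - q)
    & q <= PE k f u vp vm i <= p - q].
Proof.
move=> hf hq hk he; split.
- apply: (sumbounds (F := fun j => Dd f (U m (i + j)) (U m (i + j.+1)))) => j _.
  apply: (Dbounds hq); apply: hf.
  by rewrite addnS; apply: adjUU.
- by apply: (Dbounds hq); apply: hf; apply: adjUV.
- apply: (sumbounds (F := fun j => Dd f (V m (i + (u + j * k))) (V m (i + (u + j.+1 * k))))) => j _.
  apply: (Dbounds hq); apply: hf.
  by rewrite mulSnr !addnA; apply: adjVf.
- apply: (sumbounds (F := fun j => Dd f (V m (i + (u + vp * k + j * (m.+1 - k))))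
                     (V m (i + (u + vp * k + j.+1 * (m.+1 - k)))))) => j _.
  apply: (Dbounds hq); apply: hf.
  by rewrite mulSnr !addnA; apply: adjVb.
- rewrite /PE (V_mod (y := i)); last by rewrite -modnDmr he addn0.
  by apply: (Dbounds hq); apply: hf; apply: adjVU.
Qed.

Lemma W_sym m k p q (f : pet_vertex m.+1 -> 'I_p) u vp vm i :
  (forall x y, pet_adj m.+1 k x y -> circ_adj q (f x) (f y)) -> 1 <= q ->
  (u + vp * k + vm * (m.+1 - k)) %% m.+1 = 0 ->
  PS f u i + PE k f u vp vm (i + u) = p.
Proof.
move=> hf hq he.
rewrite /PE (V_mod (y := i + u)); last by rewrite -modnDmr he addn0.
by apply: (Dsym hq); apply: hf; apply: adjUV.
Qed.

Lemma arith1 r p q w : (2 * r + 3) * q <= w * p <= (2 * r + 3) * (p - q) ->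
  (2 * r + 1) * p < (4 * r + 4) * q -> w = r.+1 \/ w = r.+2.
Proof.
move=> /andP[h1 h2] h3.
case: (leqP w r) => hw.
  have : w * p <= r * p by apply: leq_mul.
  nia.
case: (leqP w r.+2) => hw2; first by lia.
have : r.+3 * p <= w * p by apply: leq_mul.
nia.
Qed.

Lemma key m k p q (f : pet_vertex m.+1 -> 'I_p) u vp vm r :
  (forall x y, pet_adj m.+1 k x y -> circ_adj q (f x) (f y)) -> 1 <= q -> 2 * q <= p ->
  k <= m.+1 -> odd m.+1 -> u + vp + vm = 2 * r + 1 ->
  (u + vp * k + vm * (m.+1 - k)) %% m.+1 = 0 ->
  (4 * r + 4) * q <= (2 * r + 1) * p.
Proof.
move=> hf hq hpq hk hodd hs he.
case: leqP => // hlt; exfalso.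
pose Wi i := W k f u vp vm i.
have hsq : u * q + vp * q + vm * q = (2 * r + 1) * q by rewrite -!mulnDl hs.
have hsp : u * (p - q) + vp * (p - q) + vm * (p - q) = (2 * r + 1) * (p - q)
  by rewrite -!mulnDl hs.
have hW : forall i, Wi i = (r.+1) * p \/ Wi i = (r.+2) * p.
  move=> i; have hd := W_div k f u vp vm i.
  have hw : Wi i = (Wi i %/ p) * p by rewrite divnK.
  case: (W_bounds i hf hq hk he) => /andP[a1 a2] /andP[b1 b2] /andP[c1 c2] /andP[d1 d2] /andP[e1 e2].
  have : (2 * r + 3) * q <= (Wi i %/ p) * p <= (2 * r + 3) * (p - q).
    rewrite -hw /Wi /W; apply/andP; split; lia.
  by move/arith1/(_ hlt) => [hx|hx]; rewrite hw hx; [left|right].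
have hne : forall i, (Wi (i + u) == r.+1 * p) = ~~ (Wi i == r.+1 * p).
  move=> i.
  case: (W_bounds i hf hq hk he) => /andP[a1 a2] /andP[b1 b2] /andP[c1 c2] /andP[d1 d2] /andP[e1 e2].
  case: (W_bounds (i + u) hf hq hk he) => /andP[a1' a2'] /andP[b1' b2'] /andP[c1' c2'] /andP[d1' d2'] /andP[e1' e2'].
  have hsy := @W_sym m k p q f u vp vm i hf hq he.
  have hp : 0 < p by lia.
  case: (hW i) => hi; case: (hW (i + u)) => hiu.
  - exfalso; move: hi hiu; rewrite /Wi /W => hi hiu; lia.
  - by rewrite hi hiu !eqn_pmul2r //; case: eqP; case: eqP => //; lia.
  - by rewrite hi hiu !eqn_pmul2r //; case: eqP; case: eqP => //; lia.
  - exfalso; move: hi hiu; rewrite /Wi /W => hi hiu; lia.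
have hc : forall j, (Wi (j * u) == r.+1 * p) = (Wi 0 == r.+1 * p) (+) odd j.
  elim=> [|j IH]; first by rewrite mul0n addbF.
  by rewrite mulSnr hne IH oddS addbN.
have := hc m.+1; rewrite hodd addbT.
rewrite /Wi (@W_per m k p f u vp vm (m.+1 * u) 0); last by rewrite mulnC modnMl mod0n.
by case: (_ == _).
Qed.

Lemma nat_final r p q : (4 * r + 4) * q <= (2 * r + 1) * p ->
 (8 * r ^ 2 + 8 * r + 2) * q <= (4 * r ^ 2 + 2 * r + 1) * p.
Proof.
move=> h.
have h1 := leq_mul (leqnn ((2 * r + 1) ^ 2)) h.
rewrite -(@leq_pmul2r (2 * r + 2)) ?addn2 //.
nia.
Qed.

Lemma rat_final (r p q : nat) : ((8 * r ^ 2 + 8 * r + 2) * q <= (4 * r ^ 2 + 2 * r + 1) * p)%N -> (0 < q)%N ->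
  (2 + (4 * r%:Q) / (4 * r%:Q ^+ 2 + 2 * r%:Q + 1) <= p%:Q / q%:Q)%R.
Proof.
move=> h hq.
have hq' : (0 < q%:Q)%R by rewrite ltr0n.
have hD : (0 < 4 * r%:Q ^+ 2 + 2 * r%:Q + 1)%R.
  by apply: ltr_pwDr => //; apply: addr_ge0; apply: mulr_ge0 => //; rewrite ?exprn_ge0 ?ler0n.
rewrite ler_pdivlMr // -(ler_pM2r hD).
have -> : ((2 + 4 * r%:Q / (4 * r%:Q ^+ 2 + 2 * r%:Q + 1)) * q%:Q * (4 * r%:Q ^+ 2 + 2 * r%:Q + 1)
   = (2 * (4 * r%:Q ^+ 2 + 2 * r%:Q + 1) + 4 * r%:Q) * q%:Q)%R.
  by field; apply/lt0r_neq0.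
move: h; rewrite -(ler_nat rat) !natrM !natrD !natrM.
rewrite -!pmulrn. lra.
Qed.

Theorem corollary4 (n k : nat) :
  odd n -> odd k -> (2 < 2 * k)%N -> (2 * k <= n)%N ->
  (exists u vp vm r t, ip_solution n k u vp vm r t) ->
  (forall u vp vm r t, ip_solution n k u vp vm r t -> ~ ip_trivial u vp vm) ->
  forall (u vp vm r : nat) (t : int), ip_solution n k u vp vm r t ->
    chi_c_ge (pet_adj n k)
      (2 + (4 * r%:Q) / (4 * r%:Q ^+ 2 + 2 * r%:Q + 1))%R.
Proof.
move=> hn _ _ hkn _ _ u vp vm r t [[hint hsum] _].
case: n hn hkn hint => [//|m] hn hkn hint.
rewrite /chi_c_ge => p q hq hpq [f hf].
have hk : k <= m.+1 by lia.
have hz : ((u + vp * k + vm * (m.+1 - k))%:Z = (t + vm%:Z) * m.+1%:Z)%R.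
  by rewrite mulnBr; nia.
have h0 : (0 <= t + vm%:Z)%R by nia.
have hc : (t + vm%:Z = (absz (t + vm%:Z))%:Z)%R by lia.
have he : (u + vp * k + vm * (m.+1 - k)) %% m.+1 = 0.
  move: hz; rewrite hc -PoszM => [[->]]; by rewrite modnMl.
apply: rat_final => //; apply: nat_final.
exact: (key hf hq hpq hk hn hsum he).
Qed.
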